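(* Consider online convex optimization over a convex set $\Omega\subseteq\mathbb{R}^d$ for $T$ rounds: in round $t$ the learner plays $\mathbf{w}_t\in\Omega$, after which a convex loss $f_t:\Omega\to\mathbb{R}$ is revealed. Assume every $f_t$ is $G$-Lipschitz continuous on $\Omega$ (with respect to $\|\cdot\|_2$). Then for every comparator sequence $\mathbf{u}_1,\ldots,\mathbf{u}_T\in\Omega$, \[ \sum_{t=1}^T f_t(\mathbf{w}_t)-\sum_{t=1}^T f_t(\mathbf{u}_t)\;\le\;\min_{I_1,\ldots,I_k}\sum_{i=1}^k\Big(\mathrm{SAReg}(T,|I_i|)+G\,|I_i|\,P_T(i)\Big), \] where the minimum ranges over all partitions of $[1,T]$ into consecutive intervals $I_1=[s_1,q_1],\ldots,I_k=[s_k,q_k]$, and $P_T(i)=\sum_{t=s_i}^{q_i-1}\|\mathbf{u}_{t+1}-\mathbf{u}_t\|_2$. Moreover, suppose in addition that $\Omega$ has diameter at most $D$ and $\|\nabla f_t(\mathbf{w})\|_2\le G$ for all $\mathbf{w}\in\Omega$, $t\in[T]$, and that the learner is the sleeping coin betting meta-algorithm of Jun et al. (2017) run with online gradient descent experts, so that its strongly adaptive regret satisfies $\mathrm{SAReg}(T,\tau)\le\big(\tfrac{4DG}{\sqrt2-1}+8\sqrt{7\log T+5}\big)\sqrt{\tau}$ for all $\tau$. Then for every comparator sequence, \[ \sum_{t=1}^T f_t(\mathbf{w}_t)-\sum_{t=1}^T f_t(\mathbf{u}_t)=O\Big(\max\big\{\sqrt{T\log T},\;T^{2/3}P_T^{1/3}\log^{1/3}T\big\}\Big),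 \] where $P_T=\sum_{t=1}^{T}\|\mathbf{u}_{t+1}-\mathbf{u}_t\|_2$ is the path-length and the constant in $O(\cdot)$ depends only on $D$ and $G$.
   Context: The strongly adaptive regret of the learner's plays $\mathbf{w}_1,\ldots,\mathbf{w}_T$ is $\mathrm{SAReg}(T,\tau)=\max_{[s,s+\tau-1]\subseteq[T]}\Big(\sum_{t=s}^{s+\tau-1}f_t(\mathbf{w}_t)-\min_{\mathbf{w}\in\Omega}\sum_{t=s}^{s+\tau-1}f_t(\mathbf{w})\Big)$. The left-hand side $\sum_t f_t(\mathbf{w}_t)-\sum_t f_t(\mathbf{u}_t)$ is called the dynamic regret with respect to $\mathbf{u}_1,\ldots,\mathbf{u}_T$. *)

(* Defs.v *)
From HB Require Import structures.
From mathcomp Require Import all_boot all_order all_algebra.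
From mathcomp Require Import all_classical all_reals all_analysis.
Set Implicit Arguments. Unset Strict Implicit. Unset Printing Implicit Defensive.
Import Order.TTheory GRing.Theory Num.Theory.
Local Open Scope classical_set_scope.
Local Open Scope ring_scope.

Section Defs.
Variable R : realType.
Variable d : nat.
Local Notation V := 'rV[R]_d.

Definition norm2 (x : V) : R := Num.sqrt (\sum_(i < d) x 0 i ^+ 2).

Definition oco_convex_set (Om : set V) : Prop :=
  forall x y, Om x -> Om y -> forall l : R, 0 <= l <= 1 ->
    Om (l *: x + (1 - l) *: y).

Definition oco_convex_fun (Om : set V) (f : V -> R) : Prop :=
  forall x y, Om x -> Om y -> forall l : R, 0 <= l <= 1 ->
    f (l *: x + (1 - l) *: y) <= l * f x + (1 - l) * f y.

Definition oco_lipschitz (Om : set V) (G : R) (f : V -> R) : Prop :=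
  forall x y, Om x -> Om y -> `|f x - f y| <= G * norm2 (x - y).

Definition oco_diam_le (Om : set V) (D : R) : Prop :=
  forall x y, Om x -> Om y -> norm2 (x - y) <= D.

(* Strongly adaptive regret SAReg(T, tau) of the plays w_1..w_T
   (rounds indexed 1..T), with values in the extended reals
   (the inner minimum over Om is an infimum, possibly -oo). *)
Definition SAReg (Om : set V) (f : nat -> V -> R) (w : nat -> V)
    (T tau : nat) : \bar R :=
  ereal_sup [set ((\sum_(s <= t < s + tau) f t (w t))%:E
                   - ereal_inf [set (\sum_(s <= t < s + tau) f t x)%:E
                               | x in Om])%E
            | s in [set s : nat | (1 <= s)%N /\ (s + tau <= T.+1)%N]].

Definition dyn_regret (f : nat -> V -> R) (w u : nat -> V) (T : nat) : R :=
  \sum_(1 <= t < T.+1) f t (w t) - \sum_(1 <= t < T.+1) f t (u t).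

(* A partition of [1,T] into k consecutive nonempty intervals
   I_i = [s i, s (i+1) - 1], i < k. *)
Definition interval_partition (T k : nat) (s : nat -> nat) : Prop :=
  s 0%N = 1%N /\ s k = T.+1 /\ (forall i, (i < k)%N -> (s i < s i.+1)%N).

Definition path_len (u : nat -> V) (a b : nat) : R :=
  \sum_(a <= t < b) norm2 (u t.+1 - u t).

End Defs.

(* Main.v *)
Require Import Defs.
From HB Require Import structures.
From mathcomp Require Import all_boot all_order all_algebra.
From mathcomp Require Import all_classical all_reals all_analysis.
From mathcomp Require Import zify ring lra.
Import Order.TTheory GRing.Theory Num.Theory.
Local Open Scope classical_set_scope.
Local Open Scope ring_scope.

Section Blocks.
Variable R : realType.
Variable d : nat.
Variable Om : set 'rV[R]_d.
Variable G : R.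
Variable T : nat.
Variables (f : nat -> 'rV[R]_d -> R) (w u : nat -> 'rV[R]_d).
Hypothesis Hw : forall t, (1 <= t <= T)%N -> Om (w t).
Hypothesis Hl : forall t, (1 <= t <= T)%N -> oco_lipschitz Om G (f t).
Hypothesis Hu : forall t, (1 <= t <= T)%N -> Om (u t).

Lemma gn_facts j t : (1 <= j)%N -> (j < T)%N -> (1 <= t <= T)%N ->
  f t (u j) - f t (u j.+1) <= G * norm2 (u j.+1 - u j) /\
  0 <= G * norm2 (u j.+1 - u j).
Proof.
move=> h1 h2 ht.
have hj1 : (1 <= j.+1 <= T)%N by rewrite h2.
have hj : (1 <= j <= T)%N by rewrite h1 ltnW.
have H := @Hl t ht _ _ (@Hu _ hj1) (@Hu _ hj).
split; last by apply: le_trans H.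
by apply: le_trans H; rewrite distrC ler_norm.
Qed.
Arguments gn_facts [j t].


Lemma Gpl_ge0 a b : (1 <= a)%N -> (b <= T)%N -> 0 <= G * path_len u a b.
Proof.
move=> ha hb; rewrite /path_len mulr_sumr big_seq_cond; apply: sumr_ge0 => j /andP[+ _]; rewrite mem_index_iota => /andP[aj jb].
have hT : (1 <= T)%N by lia.
have hTT : (1 <= T <= T)%N by rewrite hT leqnn.
by case: (@gn_facts j T (leq_trans ha aj) (leq_trans jb hb) hTT).
Qed.
Arguments Gpl_ge0 [a b].


Lemma Gpl_split a b c : (a <= b)%N -> (b <= c)%N ->
  G * path_len u a c = G * path_len u a b + G * path_len u b c.
Proof. by move=> ab bc; rewrite /path_len (big_cat_nat ab bc) mulrDr. Qed.
Arguments Gpl_split [a b c].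


Lemma Gpl_mono a b c : (1 <= a)%N -> (a <= b)%N -> (b <= c)%N -> (c <= T)%N ->
  G * path_len u a b <= G * path_len u a c.
Proof.
move=> ha ab bc cT; rewrite (Gpl_split ab bc) lerDl.
by apply: Gpl_ge0 => //; apply: leq_trans ab.
Qed.
Arguments Gpl_mono [a b c].


Lemma lip_chain t a n : (1 <= a)%N -> (a + n <= T)%N -> (1 <= t <= T)%N ->
  f t (u a) - f t (u (a + n)) <= G * path_len u a (a + n).
Proof.
move=> ha han ht; elim: n han => [|n IH] han.
  by rewrite addn0 subrr /path_len big_geq // mulr0.
have han' : (a + n <= T)%N by lia.
have IH' := IH han'.
rewrite /path_len addnS big_nat_recr ?leq_addr //= mulrDr.
have h1 : (1 <= a + n)%N by lia.
have h2 : (a + n < T)%N by lia.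
have [h3 _] := gn_facts h1 h2 ht.
rewrite -[X in X <= _](subrKA (f t (u (a + n)))).
by apply: lerD.
Qed.
Arguments lip_chain [t a n].


Lemma block_bound a m : (1 <= a)%N -> (1 <= m)%N -> (a + m <= T.+1)%N ->
  ((\sum_(a <= t < a + m) (f t (w t) - f t (u t)))%:E <=
   SAReg Om f w T m + (G * m%:R * path_len u a (a + m).-1)%:E)%E.
Proof.
move=> ha hm ham.
have aT : (a <= T)%N.
  by rewrite -ltnS; apply: leq_trans ham; rewrite -addn1 leq_add2l.
have Hua : Om (u a) by apply: (@Hu a); rewrite ha aT.
have H1 : ((\sum_(a <= t < a + m) f t (w t) - \sum_(a <= t < a + m) f t (u a))%:E
           <= SAReg Om f w T m)%E.
  rewrite /SAReg; apply: ereal_sup_ge.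
  eexists; first by exists a => //.
  rewrite EFinB; apply: leeB => //.
  by apply: ereal_inf_le; exists (\sum_(a <= t < a + m) f t (u a))%:E => //; exists (u a).
have H2 : \sum_(a <= t < a + m) (f t (u a) - f t (u t))
          <= G * m%:R * path_len u a (a + m).-1.
  apply: (@le_trans _ _ (\sum_(a <= t < a + m) (G * path_len u a (a + m).-1))).
    apply: ler_sum_nat => t /andP[hat tm].
    have ht : (1 <= t <= T)%N by apply/andP; split; lia.
    have hn : t = (a + (t - a))%N by lia.
    have -> : u t = u (a + (t - a))%N by rewrite -hn.
    have htT : (a + (t - a) <= T)%N by lia.
    apply: le_trans (lip_chain ha htT ht) _.
    apply: Gpl_mono => //; lia.
  by rewrite sumr_const_nat addKn -mulr_natr le_eqVlt; apply/orP; left; apply/eqP; ring.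
have -> : \sum_(a <= t < a + m) (f t (w t) - f t (u t)) =
  (\sum_(a <= t < a + m) f t (w t) - \sum_(a <= t < a + m) f t (u a)) +
  \sum_(a <= t < a + m) (f t (u a) - f t (u t)).
  by rewrite !sumrB addrA subrK.
by rewrite EFinD; apply: leeD => //; rewrite lee_fin.
Qed.

End Blocks.
Lemma part1 (R : realType) :
  (forall (d : nat) (Om : set 'rV[R]_d) (G : R) (T : nat)
     (f : nat -> 'rV[R]_d -> R) (w u : nat -> 'rV[R]_d),
     oco_convex_set Om ->
     (forall t, (1 <= t <= T)%N -> Om (w t)) ->
     (forall t, (1 <= t <= T)%N -> oco_convex_fun Om (f t)) ->
     (forall t, (1 <= t <= T)%N -> oco_lipschitz Om G (f t)) ->
     (forall t, (1 <= t <= T)%N -> Om (u t)) ->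
     forall (k : nat) (s : nat -> nat), interval_partition T k s ->
       ((dyn_regret f w u T)%:E <=
        \sum_(i < k) (SAReg Om f w T (s i.+1 - s i)
                      + (G * (s i.+1 - s i)%:R
                           * path_len u (s i) (s i.+1).-1)%:E))%E).
Proof.
move=> d Om G T f w u _ Hw _ Hl Hu k s [s0 [sk sinc]].
have smono : forall i j, (i <= j <= k)%N -> (s i <= s j)%N.
  move=> i j /andP[]; elim: j => [|j IH]; first by rewrite leqn0 => /eqP ->.
  rewrite leq_eqVlt => /orP[/eqP -> //| ij] jk.
  apply: leq_trans (IH ij (ltnW jk)) _; exact/ltnW/sinc.
have tele : forall j, (j <= k)%N -> \sum_(1 <= t < s j) (f t (w t) - f t (u t)) =
    \sum_(i < j) \sum_(s i <= t < s i.+1) (f t (w t) - f t (u t)).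
  elim => [|j IH] jk; first by rewrite s0 big_geq // big_ord0.
  rewrite big_ord_recr /= -IH ?(ltnW jk) //.
  rewrite -big_cat_nat //; first by rewrite -s0; apply: smono; rewrite leq0n ltnW.
  exact/ltnW/sinc.
rewrite /dyn_regret -sumrB -sk (tele k (leqnn k)).
rewrite -(sumEFin (index_enum _) xpredT).
apply: lee_sum => i _.
have hi : (s i < s i.+1)%N by apply: sinc.
have h1 : (1 <= s i)%N by rewrite -s0; apply: smono; rewrite leq0n (ltnW (ltn_ord i)).
have h2 : (s i.+1 <= T.+1)%N by rewrite -sk; apply: smono; rewrite leqnn andbT ltn_ord.
have h3 : (0 < s i.+1 - s i)%N by rewrite subn_gt0.
have h4 : (s i + (s i.+1 - s i) <= T.+1)%N by rewrite subnKC ?(ltnW hi).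
have := @block_bound R d Om G T f w u Hl Hu (s i) (s i.+1 - s i) h1 h3 h4.
by rewrite subnKC ?(ltnW hi).
Qed.

Section P2.
Variable R : realType.
Variable d : nat.
Variable Om : set 'rV[R]_d.
Variable G : R.
Variable T : nat.
Variables (f : nat -> 'rV[R]_d -> R) (w u : nat -> 'rV[R]_d).
Hypothesis Hl : forall t, (1 <= t <= T)%N -> oco_lipschitz Om G (f t).
Hypothesis Hu : forall t, (1 <= t <= T)%N -> Om (u t).
Variable A : R.
Hypothesis HA : 0 <= A.
Hypothesis HS : forall m, (1 <= m)%N ->
  (SAReg Om f w T m <= (A * Num.sqrt m%:R)%:E)%E.

Local Notation diff t := (f t (w t) - f t (u t)).
Let Gpl0 a b := @Gpl_ge0 R d Om G T f u Hl Hu a b.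
Let blockb a m := @block_bound R d Om G T f w u Hl Hu a m.
Let Gsplit a b c := @Gpl_split R d G u a b c.

Lemma blk a m : (1 <= a)%N -> (1 <= m)%N -> (a + m <= T.+1)%N ->
  \sum_(a <= t < a + m) diff t <=
  A * Num.sqrt m%:R + m%:R * (G * path_len u a (a + m).-1).
Proof.
move=> ha hm ham.
have H1 := blockb _ _ ha hm ham.
have H2 := leeD2r (G * m%:R * path_len u a (a + m).-1)%:E (HS _ hm).
have := le_trans H1 H2; rewrite -EFinD lee_fin => H.
by apply: (le_trans H); rewrite le_eqVlt; apply/orP; left; apply/eqP; ring.
Qed.

Lemma blocks tau : (1 <= tau)%N -> forall n a, (1 <= a)%N -> (a + n)%N = T.+1 ->
  \sum_(a <= t < T.+1) diff t <=
  A * Num.sqrt tau%:R * (n%:R / tau%:R + 1) + tau%:R * (G * path_len u a T).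
Proof.
move=> htau n; elim/ltn_ind: n => n IH a ha han.
have hsq : 0 <= Num.sqrt (tau%:R : R) by apply: sqrtr_ge0.
have htR : (0 : R) < tau%:R by rewrite ltr0n.
have hq : (0 : R) <= n%:R / tau%:R by apply: divr_ge0; rewrite ?ler0n ?ltW.
have hGT : forall b, (1 <= b)%N -> 0 <= G * path_len u b T.
  by move=> b hb; apply: Gpl0 => //.
case: (posnP n) => [n0|npos].
  rewrite big_geq; last by lia.
  apply: addr_ge0; last by apply: mulr_ge0; [rewrite ler0n|apply: hGT].
  by apply: mulr_ge0; [apply: mulr_ge0|apply: addr_ge0].
case: (leqP n tau) => hnt.
  have hle : (a + n <= T.+1)%N by lia.
  rewrite -han; apply: (le_trans (@blk a n ha npos hle)).
  have -> : (a + n).-1 = T by lia.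
  apply: lerD.
    have hsn : Num.sqrt (n%:R : R) <= Num.sqrt tau%:R by apply: ler_wsqrtr; rewrite ler_nat.
    have h1 : A * Num.sqrt n%:R <= A * Num.sqrt tau%:R by apply: ler_wpM2l.
    apply: (le_trans h1); rewrite -[X in X <= _]mulr1; apply: ler_wpM2l.
      exact: mulr_ge0.
    by rewrite lerDr.
  by apply: ler_wpM2r; [apply: hGT|rewrite ler_nat].
have hsplit : (a <= a + tau <= T.+1)%N by apply/andP; split; lia.
case/andP: hsplit => hs1 hs2.
rewrite (big_cat_nat hs1 hs2) /=.
have hle1 : (a + tau <= T.+1)%N by lia.
have B1 := @blk a tau ha htau hle1.
have hlt : (n - tau < n)%N by lia.
have ha2 : (1 <= a + tau)%N by lia.
have han2 : (a + tau + (n - tau))%N = T.+1 by lia.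
have B2 := IH (n - tau)%N hlt (a + tau)%N ha2 han2.
have E1 : G * path_len u a T = G * path_len u a (a + tau).-1 +
   G * path_len u (a + tau).-1 (a + tau) + G * path_len u (a + tau) T.
  rewrite -addrA -Gsplit; last by lia. 2: by lia.
  by rewrite -Gsplit //; lia.
have P0 : 0 <= G * path_len u (a + tau).-1 (a + tau) by apply: Gpl0; lia.
have Q : (n - tau)%:R / tau%:R + 1 + 1 = (n%:R / tau%:R + 1 : R).
  rewrite natrB ?(ltnW hnt) // mulrBl mulfV ?gt_eqF //; ring.
rewrite E1 -Q.
set X := A * Num.sqrt tau%:R in B1 B2 *.
set Y := (n - tau)%:R / tau%:R in B2 *.
set Z1 := G * path_len u a (a + tau).-1 in B1 *.
set Z2 := G * path_len u (a + tau).-1 (a + tau) in P0 *.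
set Z3 := G * path_len u (a + tau) T in B2 *.
have htR0 : (0 : R) <= tau%:R by rewrite ler0n.
nra.
Qed.
End P2.

Section S.
Variable R : realType.
Lemma cube_le (x y : R) : 0 <= x -> 0 <= y -> x ^+ 3 <= y ^+ 3 -> x <= y.
Proof. by move=> hx hy; rewrite ler_pXn2r // nnegrE. Qed.
Lemma sq_le (x y : R) : 0 <= x -> 0 <= y -> x ^+ 2 <= y ^+ 2 -> x <= y.
Proof. by move=> hx hy; rewrite ler_pXn2r // nnegrE. Qed.
Lemma root3 (x : R) : 0 <= x -> (x `^ (1/3)) ^+ 3 = x.
Proof.
move=> hx; rewrite -powR_mulrn ?powR_ge0 // -powRrM.
have -> : (1 / 3 * 3%:R : R) = 1 by field.
by rewrite powRr1.
Qed.
Lemma root23 (x : R) : 0 <= x -> x `^ (2/3) = (x `^ (1/3)) ^+ 2.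
Proof.
move=> hx; rewrite -powR_mulrn ?powR_ge0 // -powRrM.
by congr (_ `^ _); field.
Qed.

Lemma final_bound (T : nat) (L P Q g Dd K A Reg : R) :
  (1 <= T)%N -> 1 <= L -> 0 <= P -> 0 <= Q -> Q <= g * P ->
  Q <= g * Dd * T%:R -> 0 <= g -> 0 <= Dd -> 0 <= K -> 0 <= A ->
  A <= K * Num.sqrt L ->
  (forall tau : nat, (1 <= tau)%N ->
     Reg <= A * Num.sqrt tau%:R * (T%:R / tau%:R + 1) + tau%:R * Q) ->
  Reg <= (4 * K + g + g * Dd) *
     Num.max (Num.sqrt (T%:R * L)) (T%:R `^ (2/3) * P `^ (1/3) * L `^ (1/3)).
Proof.
move=> hT hL hP hQ hQ1 hQ2 hg hD hK hA hAK H.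
have hT0 : (0 : R) < T%:R by rewrite ltr0n.
have hT1 : (1 : R) <= T%:R by rewrite ler1n.
have hL0 : 0 <= L by lra.
set C := 4 * K + g + g * Dd.
have hC : 0 <= C by rewrite /C; nra.
set S := Num.sqrt (T%:R * L).
set t := (T%:R : R) `^ (1/3).
set p := (P : R) `^ (1/3).
set l := (L : R) `^ (1/3).
have ht3 : t ^+ 3 = T%:R by apply: root3; lra.
have hp3 : p ^+ 3 = P by apply: root3.
have hl3 : l ^+ 3 = L by apply: root3.
have ht0 : 0 <= t by apply: powR_ge0.
have hp0 : 0 <= p by apply: powR_ge0.
have hl0 : 0 <= l by apply: powR_ge0.
rewrite root23; last by lra.
set W := t ^+ 2 * p * l.
have hW0 : 0 <= W by rewrite /W; apply: mulr_ge0 => //; apply: mulr_ge0 => //; apply: exprn_ge0.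
have hsL : 1 <= Num.sqrt L by rewrite -sqrtr1 ler_wsqrtr.
have hsL2 : Num.sqrt L ^+ 2 = L by rewrite sqr_sqrtr.
have hS : S = Num.sqrt T%:R * Num.sqrt L by rewrite /S sqrtrM //; lra.
have hsT0 : 0 <= Num.sqrt (T%:R : R) by apply: sqrtr_ge0.
have hsT2 : Num.sqrt (T%:R : R) ^+ 2 = T%:R by rewrite sqr_sqrtr //; lra.
have toS : Reg <= C * S -> Reg <= C * Num.max S W.
  move=> h; apply: (le_trans h); apply: ler_wpM2l => //; by rewrite le_max lexx.
have toW : Reg <= C * W -> Reg <= C * Num.max S W.
  move=> h; apply: (le_trans h); apply: ler_wpM2l => //; by rewrite le_max lexx orbT.
case: (lerP (T%:R * P ^+ 2) L) => hA1.
  apply: toS; have := H T hT.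
  rewrite mulfV ?gt_eqF //.
  have hTP : T%:R * P <= S.
    apply: sq_le; [nra| apply: sqrtr_ge0|].
    rewrite /S sqr_sqrtr; last by nra.
    nra.
  move=> h; apply: (le_trans h).
  have h1 : A * Num.sqrt T%:R <= K * S.
    have := ler_wpM2r hsT0 hAK; rewrite hS => hh; apply: (le_trans hh).
    by rewrite le_eqVlt; apply/orP; left; apply/eqP; ring.
  have h2 : T%:R * Q <= g * S.
    apply: (le_trans (_ : _ <= g * (T%:R * P))); first nra.
    by apply: ler_wpM2l.
  have hS0 : 0 <= S by apply: sqrtr_ge0.
  have h3 : 0 <= K * S by nra.
  have h4 : 0 <= g * Dd * S by apply: mulr_ge0 => //; nra.
  rewrite /C !mulrDl; nra.
case: (lerP (T%:R * Num.sqrt L) P) => hC1.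
  apply: toW; have := H 1%N (leqnn 1).
  rewrite sqrtr1 divr1 mulr1 mul1r => h; apply: (le_trans h).
  have hTW : T%:R * Num.sqrt L <= W.
    apply: cube_le; [nra|done|].
    rewrite /W !exprMn ht3 hp3 hl3.
    have e : Num.sqrt L ^+ 3 = L * Num.sqrt L by rewrite exprS hsL2 mulrC.
    rewrite e.
    have hTL : 0 <= T%:R ^+ 2 * L by nra.
    have := ler_wpM2l hTL hC1.
    move=> hh; apply: (le_trans (_ : _ <= T%:R ^+ 2 * L * P)).
      by have -> : T%:R ^+ 3 * (L * Num.sqrt L) = T%:R ^+ 2 * L * (T%:R * Num.sqrt L) by ring.
    by rewrite le_eqVlt; apply/orP; left; apply/eqP; ring.
  have h1 : A * (T%:R + 1) <= 2 * K * (T%:R * Num.sqrt L) by nra.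
  have h2 : Q <= g * Dd * (T%:R * Num.sqrt L).
    apply: (le_trans hQ2); apply: ler_wpM2l; [exact: mulr_ge0 | nra].
  have h3 : K * (T%:R * Num.sqrt L) <= K * W by apply: ler_wpM2l.
  have h4 : g * Dd * (T%:R * Num.sqrt L) <= g * Dd * W by apply: ler_wpM2l; [exact: mulr_ge0|].
  have h5 : 0 <= g * W by exact: mulr_ge0.
  have h6 : 0 <= K * W by exact: mulr_ge0.
  rewrite /C !mulrDl; lra.
have hP0 : 0 < P.
  rewrite lt0r hP andbT; apply/negP => /eqP P0; move: hA1; rewrite P0 expr0n mulr0; lra.
have hp0' : 0 < p.
  rewrite lt0r hp0 andbT; apply/negP => /eqP p0.
  by move: hp3; rewrite p0 expr0n /= => hP'; lra.
set x := t ^+ 2 * l / p ^+ 2.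
have hx0 : 0 <= x by rewrite /x; apply: divr_ge0; [nra|nra].
have hxp : x * p ^+ 2 = t ^+ 2 * l by rewrite /x mulfVK // expf_neq0 // gt_eqF.
have hx1 : 1 <= x.
  have : p ^+ 2 <= t ^+ 2 * l.
    apply: cube_le; [nra|nra|].
    have -> : (p ^+ 2) ^+ 3 = (p ^+ 3) ^+ 2 by ring.
    have -> : (t ^+ 2 * l) ^+ 3 = (t ^+ 3) ^+ 2 * l ^+ 3 by ring.
    rewrite ht3 hp3 hl3.
    have : P ^+ 2 <= (T%:R * Num.sqrt L) ^+ 2 by apply: lerXn2r; rewrite ?nnegrE; nra.
    by rewrite exprMn hsL2.
  nra.
have hxT : x <= T%:R.
  have : t ^+ 2 * l <= T%:R * p ^+ 2.
    apply: cube_le; [nra|nra|].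
    have -> : (T%:R * p ^+ 2) ^+ 3 = T%:R ^+ 3 * (p ^+ 3) ^+ 2 by ring.
    have -> : (t ^+ 2 * l) ^+ 3 = (t ^+ 3) ^+ 2 * l ^+ 3 by ring.
    rewrite ht3 hp3 hl3.
    have hT2 : 0 <= (T%:R : R) ^+ 2 by rewrite sqr_ge0.
    have := ler_wpM2l hT2 (ltW hA1).
    move=> hh; apply: (le_trans hh).
    by rewrite le_eqVlt; apply/orP; left; apply/eqP; ring.
  nra.
set tau := Num.truncn x.
have htau1 : (1 <= tau)%N by rewrite truncn_ge_nat.
have htx : tau%:R <= x by rewrite truncn_le.
have hxt : x < tau.+1%:R by apply: truncnS_gt.
have htT : (tau%:R : R) <= T%:R by lra.
have htau0 : (0 : R) < tau%:R by rewrite ltr0n.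
have htau1R : (1 : R) <= tau%:R by rewrite ler1n.
have h2 : x < 2 * tau%:R by move: hxt; rewrite -natr1; lra.
apply: toW; have := H tau htau1.
move=> h; apply: (le_trans h).
set s := Num.sqrt tau%:R.
have hs0 : 0 < s by rewrite sqrtr_gt0.
have hs2 : s ^+ 2 = tau%:R by rewrite sqr_sqrtr //; lra.
have e1 : s * (T%:R / tau%:R + 1) = T%:R / s + s.
  by rewrite -hs2; field; rewrite gt_eqF.
have e2 : s <= T%:R / s by rewrite ler_pdivlMr // -expr2 hs2.
have e3 : T%:R * Num.sqrt L <= 2 * W * s.
  apply: sq_le; [nra|nra|].
  rewrite !exprMn hs2 hsL2.
  rewrite -ht3 -hl3.
  have key : t ^+ 2 * l <= 2 * tau%:R * p ^+ 2.
    rewrite -hxp; apply: ler_wpM2r; [by rewrite sqr_ge0 | lra].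
  have hpos : 0 <= t ^+ 4 * l ^+ 2 by apply: mulr_ge0; apply: exprn_ge0.
  have := ler_wpM2l hpos key => hh.
  have hpos2 : 0 <= t ^+ 4 * l ^+ 2 * (2 * tau%:R * p ^+ 2).
    apply: mulr_ge0 => //; apply: mulr_ge0; [lra| by rewrite sqr_ge0].
  apply: (le_trans (_ : _ <= t ^+ 4 * l ^+ 2 * (2 * tau%:R * p ^+ 2))).
    apply: le_trans hh; rewrite le_eqVlt; apply/orP; left; apply/eqP; ring.
  have -> : 2 ^+ 2 * (t ^+ 2 * t ^+ 2 * p ^+ 2 * l ^+ 2) * tau%:R =
     2 * (t ^+ 4 * l ^+ 2 * (2 * tau%:R * p ^+ 2)) by ring.
  lra.
have e4 : T%:R / s <= 2 * W / Num.sqrt L.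
  have hsL0 : 0 < Num.sqrt L by lra.
  rewrite ler_pdivrMr // mulrAC ler_pdivlMr //.
have e5 : A * (T%:R / s) <= 2 * K * W.
  have : A * (T%:R / s) <= K * Num.sqrt L * (2 * W / Num.sqrt L).
    apply: ler_pM => //; apply: divr_ge0; lra.
  have -> : K * Num.sqrt L * (2 * W / Num.sqrt L) = 2 * K * W.
    by field; rewrite gt_eqF //; lra.
  done.
have e6 : tau%:R * Q <= g * W.
  have : tau%:R * Q <= x * (g * P).
    apply: ler_pM => //; lra.
  have -> : x * (g * P) = g * W.
    have -> : g * W = g * p * (t ^+ 2 * l) by rewrite /W; ring.
    by rewrite -hxp -[in LHS]hp3; ring.
  done.
rewrite -mulrA e1.
have e7 : A * (T%:R / s + s) <= 2 * (A * (T%:R / s)) by nra.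
rewrite /C; nra.
Qed.
End S.

Lemma ln_ge1 (R : realType) (x : R) : expR 1 <= x -> 1 <= ln x.
Proof.
move=> hx; have hx0 : 0 < x by apply: lt_le_trans hx; apply: expR_gt0.
by rewrite -[X in X <= _](expRK 1) ler_ln // posrE expR_gt0.
Qed.

Lemma part2 (R : realType) :
  (forall D G : R, exists C T0 : R, forall (d : nat) (Om : set 'rV[R]_d)
     (T : nat) (f : nat -> 'rV[R]_d -> R) (w u : nat -> 'rV[R]_d),
     T0 <= T%:R ->
     oco_convex_set Om ->
     oco_diam_le Om D ->
     (forall t, (1 <= t <= T)%N -> Om (w t)) ->
     (forall t, (1 <= t <= T)%N -> oco_convex_fun Om (f t)) ->
     (forall t, (1 <= t <= T)%N -> oco_lipschitz Om G (f t)) ->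
     (forall tau : nat, (SAReg Om f w T tau <=
        ((4 * D * G / (Num.sqrt 2 - 1)
          + 8 * Num.sqrt (7 * ln (T%:R) + 5)) * Num.sqrt (tau%:R))%:E)%E) ->
     (forall t, (1 <= t <= T)%N -> Om (u t)) ->
     dyn_regret f w u T <=
       C * Num.max (Num.sqrt (T%:R * ln (T%:R)))
                   (T%:R `^ (2 / 3) * (path_len u 1 T) `^ (1 / 3)
                      * (ln (T%:R)) `^ (1 / 3))).
Proof.
move=> D G.
set c1 := 4 * D * G / (Num.sqrt 2 - 1).
set K := `|c1| + 32.
exists (4 * K + `|G| + `|G| * `|D|), (expR 1).
move=> d Om T f w u hT0 _ hdiam Hw _ Hl HS Hu.
set L := ln (T%:R : R).
have hL : 1 <= L by apply: ln_ge1.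
have hT : (1 <= T)%N.
  have : (0 : R) < T%:R by apply: lt_le_trans hT0; apply: expR_gt0.
  by rewrite ltr0n.
set A := `|c1| + 8 * Num.sqrt (7 * L + 5).
have hsq0 : forall y : R, 0 <= Num.sqrt y by move=> y; apply: sqrtr_ge0.
have hA0 : 0 <= A by rewrite /A; apply: addr_ge0 => //; apply: mulr_ge0.
have HS' : forall m, (1 <= m)%N ->
    (SAReg Om f w T m <= (A * Num.sqrt m%:R)%:E)%E.
  move=> m _; apply: (le_trans (HS m)); rewrite lee_fin.
  apply: ler_wpM2r => //; rewrite /A lerD2r; exact: ler_norm.
have hsL : 1 <= Num.sqrt L by rewrite -sqrtr1 ler_wsqrtr.
have hAK : A <= K * Num.sqrt L.
  have h1 : Num.sqrt (7 * L + 5) <= 4 * Num.sqrt L.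
    apply: sq_le; [exact: sqrtr_ge0 | apply: mulr_ge0; [lra | exact: sqrtr_ge0] |].
    rewrite exprMn !sqr_sqrtr; lra.
  have h2 : `|c1| <= `|c1| * Num.sqrt L.
    by rewrite -[X in X <= _]mulr1; apply: ler_wpM2l.
  rewrite /K /A mulrDl; lra.
set P := path_len u 1 T.
have hP0 : 0 <= P by rewrite /P /path_len; apply: sumr_ge0 => j _; rewrite /norm2; exact: sqrtr_ge0.
have HR : forall tau : nat, (1 <= tau)%N ->
    dyn_regret f w u T <= A * Num.sqrt tau%:R * (T%:R / tau%:R + 1) + tau%:R * (G * P).
  move=> tau htau.
  have := @blocks R d Om G T f w u Hl Hu A hA0 HS' tau htau T 1%N (leqnn 1) (add1n T).
  by rewrite /dyn_regret sumrB.
have hQ0 : 0 <= G * P by apply: (@Gpl_ge0 R d Om G T f u Hl Hu).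
have hQ1 : G * P <= `|G| * P by apply: ler_wpM2r => //; exact: ler_norm.
have hQ2 : G * P <= `|G| * `|D| * T%:R.
  rewrite /P /path_len mulr_sumr.
  apply: (le_trans (_ : _ <= \sum_(1 <= j < T) (`|G| * `|D|))).
    apply: ler_sum_nat => j /andP[j1 jT].
    have hj1 : (1 <= j.+1 <= T)%N by apply/andP; split; lia.
    have hj : (1 <= j <= T)%N by apply/andP; split; lia.
    have hn := hdiam _ _ (Hu _ hj1) (Hu _ hj).
    have hn0 : 0 <= norm2 (u j.+1 - u j) by exact: sqrtr_ge0.
    apply: (le_trans (_ : _ <= `|G| * norm2 (u j.+1 - u j))); first by apply: ler_wpM2r => //; exact: ler_norm.
    apply: ler_wpM2l => //; apply: (le_trans hn); exact: ler_norm.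
  rewrite sumr_const_nat -[_ *+ (T - 1)]mulr_natr; apply: ler_wpM2l; first by apply: mulr_ge0.
  by rewrite ler_nat leq_subr.
have := @final_bound R T L P (G * P) `|G| `|D| K A (dyn_regret f w u T) hT hL hP0 hQ0 hQ1 hQ2
  (normr_ge0 _) (normr_ge0 _) _ hA0 hAK HR.
by apply; rewrite /K; apply: addr_ge0.
Qed.

Theorem theorem1 (R : realType) :
  (* Part 1: dynamic regret bound via any partition into intervals *)
  (forall (d : nat) (Om : set 'rV[R]_d) (G : R) (T : nat)
     (f : nat -> 'rV[R]_d -> R) (w u : nat -> 'rV[R]_d),
     oco_convex_set Om ->
     (forall t, (1 <= t <= T)%N -> Om (w t)) ->
     (forall t, (1 <= t <= T)%N -> oco_convex_fun Om (f t)) ->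
     (forall t, (1 <= t <= T)%N -> oco_lipschitz Om G (f t)) ->
     (forall t, (1 <= t <= T)%N -> Om (u t)) ->
     forall (k : nat) (s : nat -> nat), interval_partition T k s ->
       ((dyn_regret f w u T)%:E <=
        \sum_(i < k) (SAReg Om f w T (s i.+1 - s i)
                      + (G * (s i.+1 - s i)%:R
                           * path_len u (s i) (s i.+1).-1)%:E))%E)
  /\
  (* Part 2: O(max{sqrt(T log T), T^(2/3) P_T^(1/3) log^(1/3) T}) *)
  (forall D G : R, exists C T0 : R, forall (d : nat) (Om : set 'rV[R]_d)
     (T : nat) (f : nat -> 'rV[R]_d -> R) (w u : nat -> 'rV[R]_d),
     T0 <= T%:R ->
     oco_convex_set Om ->
     oco_diam_le Om D ->
     (forall t, (1 <= t <= T)%N -> Om (w t)) ->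
     (forall t, (1 <= t <= T)%N -> oco_convex_fun Om (f t)) ->
     (forall t, (1 <= t <= T)%N -> oco_lipschitz Om G (f t)) ->
     (forall tau : nat, (SAReg Om f w T tau <=
        ((4 * D * G / (Num.sqrt 2 - 1)
          + 8 * Num.sqrt (7 * ln (T%:R) + 5)) * Num.sqrt (tau%:R))%:E)%E) ->
     (forall t, (1 <= t <= T)%N -> Om (u t)) ->
     dyn_regret f w u T <=
       C * Num.max (Num.sqrt (T%:R * ln (T%:R)))
                   (T%:R `^ (2 / 3) * (path_len u 1 T) `^ (1 / 3)
                      * (ln (T%:R)) `^ (1 / 3))).
Proof.
split; [exact: part1 | exact: part2].
Qed.
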